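(* Let $A\in\mathbb{C}^{n\times n}$ be positive definite (i.e. $A+A^*$ is Hermitian positive definite), let $C\in\mathbb{C}^{m\times m}$ be positive semidefinite (i.e. $C+C^*$ is Hermitian positive semidefinite), let $B\in\mathbb{C}^{m\times n}$ with $m\le n$, and let $$\mathcal{A}=\begin{bmatrix}A&B^*\\-B&C\end{bmatrix}$$ be singular, with linear system $\mathcal{A}u=b$. Write $A=A_P+A_S$ with $A_P$ positive definite and $A_S$ skew-Hermitian, $C=C_P+C_S$ with $C_P$ positive semidefinite and $C_S$ skew-Hermitian, and $B=B_P+B_S$ an arbitrary splitting. Let $P_\alpha\in\mathbb{C}^{n\times n}$, $P_\beta\in\mathbb{C}^{m\times m}$ be Hermitian positive definite, set $$\mathcal{P}=\begin{bmatrix}A_P&B_P^*\\-B_P&C_P\end{bmatrix},\quad \mathcal{S}=\begin{bmatrix}A_S&B_S^*\\-B_S&C_S\end{bmatrix},\quad \Sigma=\begin{bmatrix}P_\alpha&0\\0&P_\beta\end{bmatrix},$$ and consider the EPSS iteration $u^{k+1}=\Gamma_{\mathrm{EPSS}}u^k+c$ with $\Gamma_{\mathrm{EPSS}}=(\Sigma+\mathcal{S})^{-1}(\Sigma-\mathcal{P})(\Sigma+\mathcal{P})^{-1}(\Sigma-\mathcal{S})$ and $c=2(\Sigma+\mathcal{S})^{-1}\Sigma(\Sigma+\mathcal{P})^{-1}b$. Suppose $\mathrm{null}(C+C^* )\subseteq\mathrm{null}(C)$ and that at least one of the following holds: (1) for all nonzero $r\in\mathrm{null}(C+C^* )$, $r^*(P_\beta+C_SP_\beta^{-1}C_S^*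 )r\neq r^*(B_SP_\alpha^{-1}B_P^* )r$; (2) every nonzero $r\in\mathrm{null}(C+C^* )$ satisfies $r^*(B_SP_\alpha^{-1}B_P^* )r\le 0$; (3) $\mathrm{null}(C+C^* )\subseteq\mathrm{null}(B_S^* )\cup\mathrm{null}(B_P^* )$; (4) $C$ is positive definite, or $B_S=0$, or $B_P=0$. Then the EPSS iteration is semi-convergent, i.e. it converges to a solution of $\mathcal{A}u=b$ for every initial guess $u^0$.
   Context: $\mathrm{null}(\cdot)$ denotes the null space. An iteration for a singular system is called semi-convergent if it converges to a solution of the system for any initial guess; the system $\mathcal{A}u=b$ is understood to be consistent (solvable). In condition (2), ''$\le 0$'' means the (complex) number is real and nonpositive. *)

(* Defs.v *)
From HB Require Import structures.
From mathcomp Require Import all_boot all_order all_algebra.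
From mathcomp Require Import all_classical all_reals all_analysis.
From mathcomp Require Import complex.
Set Implicit Arguments. Unset Strict Implicit. Unset Printing Implicit Defensive.
Import Order.TTheory GRing.Theory Num.Theory.
Import numFieldNormedType.Exports.
Local Open Scope ring_scope.
Local Open Scope complex_scope.
Local Open Scope classical_set_scope.

Section Defs.
Variable R : realType.
Local Notation C := R[i].
(* topology on C^N: the normed-module structure of 'cV[C^o]_N (C^o = C as
   a normed module over itself, max-norm on vectors) *)

Definition ctr m n (M : 'M[C]_(m, n)) : 'M[C]_(n, m) := (map_mx (fun z : C => z^*) M)^T.

Definition qform n (M : 'M[C]_n) (x : 'cV[C]_n) : C := (ctr x *m M *m x) 0 0.

Definition hermitian n (M : 'M[C]_n) := ctr M = M.
Definition skew_hermitian n (M : 'M[C]_n) := ctr M = - M.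

Definition hpd n (M : 'M[C]_n) :=
  hermitian M /\ forall x : 'cV[C]_n, x != 0 -> 0 < qform M x.
Definition hpsd n (M : 'M[C]_n) :=
  hermitian M /\ forall x : 'cV[C]_n, 0 <= qform M x.

Definition posdef n (M : 'M[C]_n) := hpd (M + ctr M).
Definition possemidef n (M : 'M[C]_n) := hpsd (M + ctr M).

Definition in_null m n (M : 'M[C]_(m, n)) (x : 'cV[C]_n) := M *m x = 0.

Definition iterate N (G : 'M[C]_N) (c u0 : 'cV[C]_N) (k : nat) : 'cV[C]_N :=
  iter k (fun u => G *m u + c) u0.

Definition semi_convergent N (G : 'M[C]_N) (c : 'cV[C]_N)
    (Acal : 'M[C]_N) (b : 'cV[C]_N) :=
  forall u0 : 'cV[C]_N, exists2 u : 'cV[C]_N,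
    ((iterate G c u0 k : 'cV[C^o]_N) @[k --> \oo] --> (u : 'cV[C^o]_N))
    & Acal *m u = b.

End Defs.

(* Main.v *)
Require Import Defs.
From HB Require Import structures.
From mathcomp Require Import all_boot all_order all_algebra.
From mathcomp Require Import all_classical all_reals all_analysis.
From mathcomp Require Import complex.
From mathcomp Require Import ring lra.
Import Order.TTheory GRing.Theory Num.Theory.
Import numFieldNormedType.Exports.
Local Open Scope ring_scope.
Set Implicit Arguments. Unset Strict Implicit. Unset Printing Implicit Defensive.
Section Aux.
Variable R : realType.
Local Notation C := R[i].
Local Open Scope complex_scope.

Lemma ctrM m n p (X : 'M[C]_(m,n)) (Y : 'M[C]_(n,p)) : ctr (X *m Y) = ctr Y *m ctr X.
Proof. by rewrite /ctr map_mxM trmx_mul. Qed.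
Lemma ctrD m n (X Y : 'M[C]_(m,n)) : ctr (X + Y) = ctr X + ctr Y.
Proof. by rewrite /ctr map_mxD linearD. Qed.
Lemma ctrN m n (X : 'M[C]_(m,n)) : ctr (- X) = - ctr X.
Proof. by rewrite /ctr map_mxN linearN. Qed.
Lemma ctrB m n (X Y : 'M[C]_(m,n)) : ctr (X - Y) = ctr X - ctr Y.
Proof. by rewrite ctrD ctrN. Qed.
Lemma ctrZ m n a (X : 'M[C]_(m,n)) : ctr (a *: X) = conjc a *: ctr X.
Proof. by rewrite /ctr map_mxZ linearZ. Qed.
Lemma ctrK m n (X : 'M[C]_(m,n)) : ctr (ctr X) = X.
Proof. by apply/matrixP=> i j; rewrite /ctr !mxE conjcK. Qed.
Lemma ctr0 m n : ctr (0 : 'M[C]_(m,n)) = 0.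
Proof. by rewrite /ctr map_mx0 trmx0. Qed.
Lemma ctr1 n : ctr (1%:M : 'M[C]_n) = 1%:M.
Proof. by apply/matrixP=> i j; rewrite /ctr !mxE eq_sym conjc_nat. Qed.
Lemma ctr_block m1 m2 n1 n2 (a : 'M[C]_(m1,n1)) (b : 'M[C]_(m1,n2)) (c : 'M[C]_(m2,n1)) (d : 'M[C]_(m2,n2)) :
  ctr (block_mx a b c d) = block_mx (ctr a) (ctr c) (ctr b) (ctr d).
Proof. by rewrite /ctr map_block_mx tr_block_mx. Qed.
Lemma ctr_col m1 m2 n (a : 'M[C]_(m1,n)) (b : 'M[C]_(m2,n)) :
  ctr (col_mx a b) = row_mx (ctr a) (ctr b).
Proof. by rewrite /ctr map_col_mx tr_col_mx. Qed.
Lemma ctr_inv n (M : 'M[C]_n) : ctr (invmx M) = invmx (ctr M).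
Proof. by rewrite /ctr map_invmx trmx_inv. Qed.
Lemma ctr_unit n (M : 'M[C]_n) : (ctr M \in unitmx) = (M \in unitmx).
Proof. by rewrite /ctr unitmx_tr map_unitmx. Qed.

End Aux.
Section BF.
Variable R : realType.
Local Notation C := R[i].
Local Open Scope complex_scope.

Definition bf m n (M : 'M[C]_(m,n)) (u : 'cV[C]_m) (v : 'cV[C]_n) : C :=
  (ctr u *m M *m v) 0 0.

Lemma qformE n (M : 'M[C]_n) x : qform M x = bf M x x.
Proof. by []. Qed.

Lemma bf_conj m n (M : 'M[C]_(m,n)) u v : conjc (bf M u v) = bf (ctr M) v u.
Proof.
have h (Y : 'M[C]_1) : conjc (Y 0 0) = (ctr Y) 0 0 by rewrite /ctr !mxE.
by rewrite /bf h !ctrM ctrK mulmxA.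
Qed.

Lemma bfDl m n (M : 'M[C]_(m,n)) u1 u2 v : bf M (u1 + u2) v = bf M u1 v + bf M u2 v.
Proof. by rewrite /bf ctrD !mulmxDl mxE. Qed.
Lemma bfDr m n (M : 'M[C]_(m,n)) u v1 v2 : bf M u (v1 + v2) = bf M u v1 + bf M u v2.
Proof. by rewrite /bf !mulmxDr mxE. Qed.
Lemma bfZl m n (M : 'M[C]_(m,n)) a u v : bf M (a *: u) v = conjc a * bf M u v.
Proof. by rewrite /bf ctrZ -!scalemxAl mxE. Qed.
Lemma bfZr m n (M : 'M[C]_(m,n)) a u v : bf M u (a *: v) = a * bf M u v.
Proof. by rewrite /bf -!scalemxAr mxE. Qed.
Lemma bfNl m n (M : 'M[C]_(m,n)) u v : bf M (- u) v = - bf M u v.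
Proof. by rewrite -scaleN1r bfZl rmorphN rmorph1 mulN1r. Qed.
Lemma bfNr m n (M : 'M[C]_(m,n)) u v : bf M u (- v) = - bf M u v.
Proof. by rewrite -scaleN1r bfZr mulN1r. Qed.
Lemma bfBl m n (M : 'M[C]_(m,n)) u1 u2 v : bf M (u1 - u2) v = bf M u1 v - bf M u2 v.
Proof. by rewrite bfDl bfNl. Qed.
Lemma bfBr m n (M : 'M[C]_(m,n)) u v1 v2 : bf M u (v1 - v2) = bf M u v1 - bf M u v2.
Proof. by rewrite bfDr bfNr. Qed.
Lemma bfDM m n (M1 M2 : 'M[C]_(m,n)) u v : bf (M1 + M2) u v = bf M1 u v + bf M2 u v.
Proof. by rewrite /bf mulmxDr mulmxDl mxE. Qed.
Lemma bfNM m n (M : 'M[C]_(m,n)) u v : bf (- M) u v = - bf M u v.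
Proof. by rewrite /bf mulmxN mulNmx mxE. Qed.
Lemma bf_mulr m n p (M : 'M[C]_(m,n)) (K : 'M[C]_(n,p)) u v : bf M u (K *m v) = bf (M *m K) u v.
Proof. by rewrite /bf !mulmxA. Qed.
Lemma bf_mull m n p (M : 'M[C]_(m,n)) (K : 'M[C]_(m,p)) u v : bf M (K *m u) v = bf (ctr K *m M) u v.
Proof. by rewrite /bf ctrM !mulmxA. Qed.
Lemma bf0M m n (u : 'cV[C]_m) (v : 'cV[C]_n) : bf 0 u v = 0.
Proof. by rewrite /bf mulmx0 mul0mx mxE. Qed.
Lemma bf0l m n (M : 'M[C]_(m,n)) v : bf M 0 v = 0.
Proof. by rewrite /bf ctr0 !mul0mx mxE. Qed.
Lemma bf0r m n (M : 'M[C]_(m,n)) u : bf M u 0 = 0.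
Proof. by rewrite /bf mulmx0 mxE. Qed.
Lemma bf1 n (u v : 'cV[C]_n) : bf 1%:M u v = (ctr u *m v) 0 0.
Proof. by rewrite /bf mulmx1. Qed.

Lemma bf_block m1 m2 n1 n2 (a : 'M[C]_(m1,n1)) (b : 'M[C]_(m1,n2)) (c : 'M[C]_(m2,n1)) (d : 'M[C]_(m2,n2)) u1 u2 v1 v2 :
  bf (block_mx a b c d) (col_mx u1 u2) (col_mx v1 v2) =
  bf a u1 v1 + bf b u1 v2 + bf c u2 v1 + bf d u2 v2.
Proof.
rewrite /bf ctr_col mul_row_block mul_row_col !mulmxDl !mxE.
by rewrite !addrA; congr (_ + _); rewrite -!addrA; congr (_ + _); rewrite addrC.
Qed.

Definition Q n (M : 'M[C]_n) (x : 'cV[C]_n) : R := complex.Re (bf M x x).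

Lemma Re_conj (z : C) : complex.Re (conjc z) = complex.Re z.
Proof. by case: z. Qed.
Lemma Im_conj (z : C) : complex.Im (conjc z) = - complex.Im z.
Proof. by case: z. Qed.

Lemma Q_ctr n (M : 'M[C]_n) x : Q (ctr M) x = Q M x.
Proof. by rewrite /Q -bf_conj Re_conj. Qed.

Lemma QDM n (M1 M2 : 'M[C]_n) x : Q (M1 + M2) x = Q M1 x + Q M2 x.
Proof. by rewrite /Q bfDM raddfD. Qed.

Lemma Q_skew n (M : 'M[C]_n) x : skew_hermitian M -> Q M x = 0.
Proof.
move=> hM; have := Q_ctr M x; rewrite hM /Q bfNM raddfN /= => h.
rewrite /Q; lra.
Qed.

Lemma hermitian_real n (M : 'M[C]_n) x : Defs.hermitian M -> bf M x x = real_complex R (Q M x).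
Proof.
move=> hM; have h := bf_conj M x x; rewrite hM in h.
rewrite /Q; case: (bf M x x) h => a b [] h /=; apply/eqP; rewrite eq_complex /= eqxx /=; apply/eqP; lra.
Qed.

Lemma qform_herm_part n (M : 'M[C]_n) x : qform (M + ctr M) x = real_complex R (2%:R * Q M x).
Proof.
rewrite qformE bfDM -bf_conj /Q; case: (bf M x x) => a b /=.
apply/eqP; rewrite eq_complex /=; apply/andP; split; apply/eqP; lra.
Qed.

Lemma posdef_Q n (M : 'M[C]_n) x : posdef M -> x != 0 -> 0 < Q M x.
Proof.
case=> _ h /h; rewrite qform_herm_part ltcR => h2.
by rewrite -(pmulr_rgt0 _ (ltr0n R 2)).
Qed.

Lemma possemidef_Q n (M : 'M[C]_n) x : possemidef M -> 0 <= Q M x.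
Proof.
case=> _ /(_ x); rewrite qform_herm_part lecR => h2.
by rewrite -(pmulr_rge0 _ (ltr0n R 2)).
Qed.

Lemma hpd_Q n (M : 'M[C]_n) x : hpd M -> x != 0 -> 0 < Q M x.
Proof. by case=> hM h /h; rewrite qformE (hermitian_real _ hM) ltcR. Qed.

Lemma hpsd_Q n (M : 'M[C]_n) x : hpsd M -> 0 <= Q M x.
Proof. by case=> hM /(_ x); rewrite qformE (hermitian_real _ hM) lecR. Qed.

End BF.
Section PSD.
Variable R : realType.
Local Notation C := R[i].
Local Open Scope complex_scope.

Lemma ReMR (t : R) (z : C) : complex.Re (real_complex R t * z) = t * complex.Re z.
Proof. by case: z => a b /=; rewrite mul0r subr0. Qed.

Lemma ctr_delta n (i : 'I_n) : ctr (delta_mx i (0 : 'I_1) : 'cV[C]_n) = delta_mx 0 i.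
Proof. by apply/matrixP=> k l; rewrite /ctr !mxE conjc_nat andbC. Qed.

Lemma bf_delta n (M : 'M[C]_n) x i : bf M (delta_mx i 0) x = (M *m x) i 0.
Proof. by rewrite /bf ctr_delta -mulmxA -rowE mxE. Qed.

Lemma psd_zero n (M : 'M[C]_n) x : Defs.hermitian M -> (forall y, 0 <= Q M y) ->
  Q M x = 0 -> M *m x = 0.
Proof.
move=> hM hpos hx.
have key y : complex.Re (bf M y x) = 0.
  have e (t : R) : Q M (x + real_complex R t *: y) =
      2%:R * t * complex.Re (bf M y x) + t ^+ 2 * Q M y.
    have cR : conjc (real_complex R t) = real_complex R t.
      by apply/eqP; rewrite eq_complex /= oppr0 !eqxx.
    rewrite /Q bfDl !bfDr !bfZl !bfZr cR.
    have -> : bf M x y = conjc (bf M y x) by rewrite bf_conj hM.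
    rewrite !raddfD /= mulrA -rmorphM !ReMR Re_conj -/(Q M x) hx; rewrite /Q; ring.
  set b := complex.Re (bf M y x); set g := Q M y.
  have g0 : 0 <= g := hpos y.
  set s := (g + 1)^-1.
  have s0 : 0 < s by rewrite invr_gt0; lra.
  have sg : s * (g + 1) = 1 by rewrite mulVf //; lra.
  have := hpos (x + real_complex R (- b * s) *: y); rewrite e -/b -/g => h.
  have : b ^+ 2 * s <= 0 by nra.
  by rewrite pmulr_lle0 // => hb; apply/eqP; rewrite -sqrf_eq0 eq_le hb sqr_ge0.
have key2 y : bf M y x = 0.
  have := key ('i *: y); rewrite bfZl.
  have := key y; case: (bf M y x) => a b /= -> /=.
  by move=> h; apply/eqP; rewrite eq_complex /=; apply/andP; split; apply/eqP; lra.
by apply/matrixP=> i j; rewrite ord1 -bf_delta key2 mxE.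
Qed.

End PSD.
Section RL.
Variable R : realType.
Local Open Scope classical_set_scope.

Lemma near_ex (P : nat -> Prop) : (\forall k \near \oo, P k) -> exists K, forall k, (K <= k)%N -> P k.
Proof. by move=> [K _ hK]; exists K. Qed.

Lemma RL (x e : nat -> R) q : 0 <= q -> q < 1 -> (forall k, 0 <= x k) ->
  (forall k, x k.+1 <= q * x k + e k) ->
  (forall d, 0 < d -> exists K, forall k, (K <= k)%N -> e k < d) ->
  forall d, 0 < d -> exists K, forall k, (K <= k)%N -> x k < d.
Proof.
move=> q0 q1 x0 hx he d d0.
have [K hK] := he (d * (1 - q) / 2) ltac:(apply: divr_gt0 => //; apply: mulr_gt0 => //; lra).
have ind j : x (K + j)%N <= d / 2 + q ^+ j * x K.
  elim: j => [|j IH]; first by rewrite addn0 expr0 mul1r; have := x0 K; lra.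
  rewrite addnS; apply: le_trans (hx _) _.
  have := hK (K + j)%N (leq_addr _ _); rewrite exprS => h.
  have h2 : q * x (K + j)%N <= q * (d / 2 + q ^+ j * x K) by apply: ler_wpM2l.
  have e1 : d * (1 - q) / 2 = d / 2 - q * (d / 2) by field.
  rewrite e1 in h.
  rewrite mulrDr in h2; rewrite -mulrA; lra.
have hq : `|q| < 1 by rewrite ger0_norm.
set eps := d / (2 * (x K + 1)).
have eps0 : 0 < eps by apply: divr_gt0 => //; have := x0 K; lra.
have [J hJ] := near_ex ((cvgrPdist_lt _ _).1 (cvg_expr hq) eps eps0).
exists (K + J)%N => k hk.
have -> : k = (K + (k - K))%N by rewrite subnKC // (leq_trans (leq_addr J K) hk).
have hj : (J <= k - K)%N by rewrite leq_subRL ?(leq_trans (leq_addr J K) hk).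
have := hJ _ hj; rewrite sub0r normrN ger0_norm ?exprn_ge0 // => hqj.
have hqj2 : q ^+ (k - K) * (2 * (x K + 1)) < d.
  by rewrite -ltr_pdivlMr //; have := x0 K; lra.
have := ind (k - K)%N; have := x0 K; have : 0 <= q ^+ (k - K) by rewrite exprn_ge0.
nra.
Qed.

End RL.
Section VL.
Variable R : realType.
Local Notation C := R[i].
Local Open Scope classical_set_scope.

Lemma ex_near (P : nat -> Prop) : (exists K, forall k, (K <= k)%N -> P k) -> \forall k \near \oo, P k.
Proof. by move=> [K hK]; exists K => // k /hK. Qed.

Lemma Cnorm_real (z : C) : 0 <= z -> z = real_complex R (complex.Re z).
Proof.
move=> z0; have := ger0_Im z0; case: z z0 => a b /= _ ->.
by apply/eqP; rewrite eq_complex /= !eqxx.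
Qed.

Lemma VL (V : normedModType C) (l : C) (s a : nat -> V) (L0 : V) :
  `|l| < 1 -> a k @[k --> \oo] --> L0 -> (forall k, s k.+1 = l *: s k + a k) ->
  s k @[k --> \oo] --> (1 - l)^-1 *: L0.
Proof.
move=> hl ha hs.
set L := (1 - l)^-1 *: L0.
have hl1 : 1 - l != 0.
  apply/negP; rewrite subr_eq0 => /eqP hl'; move: hl; rewrite -hl' normr1 ltxx //.
have hL : l *: L + L0 = L.
  have h1 : (1 - l) *: L = L0 by rewrite /L scalerA mulfV // scale1r.
  by rewrite -h1 scalerBl scale1r addrC subrK.
set t := fun k => s k - L.
have ht k : t k.+1 = l *: t k + (a k - L0).
  by rewrite /t hs scalerBr -{1}hL opprD !addrA; congr (_ + _); rewrite addrAC.
pose x := fun j => complex.Re `|t j|.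
pose e := fun j => complex.Re `|a j - L0|.
pose q := complex.Re `|l|.
have hxC k : `|t k| = real_complex R (x k) by rewrite /x; apply: Cnorm_real; exact: normr_ge0.
have heC k : `|a k - L0| = real_complex R (e k) by rewrite /e; apply: Cnorm_real; exact: normr_ge0.
have hqC : `|l| = real_complex R q by rewrite /q; apply: Cnorm_real; exact: normr_ge0.
have q0 : 0 <= q by rewrite -lecR -hqC rmorph0 normr_ge0.
have q1 : q < 1 by rewrite -ltcR -hqC rmorph1.
have x0 k : 0 <= x k by rewrite -lecR -hxC rmorph0 normr_ge0.
have hx k : x k.+1 <= q * x k + e k.
  rewrite -lecR rmorphD rmorphM /= -hxC -hqC -heC ht.
  by apply: le_trans (ler_normD _ _) _; rewrite normrZ hxC.
have he d : 0 < d -> exists K, forall k, (K <= k)%N -> e k < d.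
  move=> d0; have d0' : 0 < real_complex R d by rewrite ltcR.
  have [K hK] := near_ex ((cvgrPdist_lt _ _).1 ha _ d0').
  by exists K => k /hK; rewrite distrC heC ltcR.
apply/cvgrPdist_lt => eps eps0.
have := eps0; rewrite ltcE /= => /andP [/eqP hIm hRe].
have [K hK] := RL q0 q1 x0 hx he hRe.
apply: ex_near; exists K => k /hK hk.
have -> : L - s k = - t k by rewrite /t opprB.
rewrite normrN hxC (Cnorm_real (ltW eps0)) ltcR //.
Qed.

End VL.
Section Abstract.
Variable R : realType.
Local Notation C := R[i].
Local Open Scope classical_set_scope.

Lemma char_poly_tr n (A : 'M[C]_n) : char_poly A^T = char_poly A.
Proof.
rewrite /char_poly -det_tr /char_poly_mx linearB /= tr_scalar_mx map_trmx trmxK //.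
Qed.

Lemma root_eigen n (G : 'M[C]_n) z : root (char_poly G) z ->
  exists2 x : 'cV[C]_n, x != 0 & G *m x = z *: x.
Proof.
rewrite -char_poly_tr -eigenvalue_root_char => /eigenvalueP [v hv v0].
exists v^T; first by apply: contra v0 => /eqP h; rewrite -[v]trmxK h trmx0.
by rewrite -[G]trmxK -trmx_mul hv linearZ.
Qed.

Definition itG n (G : 'M[C]_n) k (y : 'cV[C]_n) : 'cV[C]_n :=
  iter k (fun u => G *m u) y.

Lemma itG_S n (G : 'M[C]_n) k y : itG G k.+1 y = G *m itG G k y.
Proof. by []. Qed.

Lemma iter_comm n (G M : 'M[C]_n) y k : G *m M = M *m G ->
  itG G k (M *m y) = M *m itG G k y.
Proof. by move=> hc; elim: k => //= k; rewrite /itG /= => ->; rewrite !mulmxA hc. Qed.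

Lemma iter_fix n (G : 'M[C]_n) y k : G *m y = y -> itG G k y = y.
Proof. by move=> h; elim: k => //= k; rewrite /itG /= => ->. Qed.

Lemma cvg_fix n (G : 'M[C]_n) y : G *m y = y ->
  (itG G k y : 'cV[C^o]_n) @[k --> \oo] --> (y : 'cV[C^o]_n).
Proof.
move=> h; apply: cvg_near_cst; apply: nearW => k; exact: iter_fix.
Qed.

End Abstract.
Section Abstract2.
Variable R : realType.
Local Notation C := R[i].
Local Open Scope classical_set_scope.

Lemma hornerXsubC n' (G : 'M[C]_n'.+1) z : horner_mx G ('X - z%:P) = G - z%:M.
Proof. by rewrite rmorphB /= horner_mx_X horner_mx_C. Qed.

Lemma claimB n' (G : 'M[C]_n'.+1) (r : seq C) :
  (forall z, z \in r -> z != 1 -> `|z| < 1) ->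
  forall y, G *m (horner_mx G (\prod_(z <- r | z != 1) ('X - z%:P)) *m y) =
             horner_mx G (\prod_(z <- r | z != 1) ('X - z%:P)) *m y ->
  exists2 w : 'cV[C]_n'.+1,
    (itG G k y : 'cV[C^o]_n'.+1) @[k --> \oo] --> (w : 'cV[C^o]_n'.+1) & G *m w = w.
Proof.
elim: r => [|z r IH] hr y.
  rewrite big_nil rmorph1 mul1mx => hy; exists y => //; exact: cvg_fix.
have hr' : forall t, t \in r -> t != 1 -> `|t| < 1.
  by move=> t ht; apply: hr; rewrite in_cons ht orbT.
rewrite big_cons; case: ifP => hz; last exact: IH.
rewrite mulrC rmorphM /= hornerXsubC -mulmxE -!mulmxA => hy.
have [w' hw' Gw'] := IH hr' _ hy.
have hz1 : `|z| < 1 by apply: hr; rewrite ?in_cons ?eqxx ?hz.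
have hcomm : G *m (G - z%:M) = (G - z%:M) *m G.
  by rewrite mulmxBr mulmxBl scalar_mxC.
have hrec k : itG G k.+1 y = z *: itG G k y + itG G k ((G - z%:M) *m y).
  rewrite iter_comm // itG_S mulmxBl mul_scalar_mx addrC subrK //.
have := @VL R ('cV[C^o]_n'.+1) z (fun k => itG G k y) (fun k => itG G k ((G - z%:M) *m y)) w' hz1 hw' hrec.
move=> hcv; exists ((1 - z)^-1 *: w') => //.
by rewrite -scalemxAr Gw'.
Qed.

Lemma claimA n' (G : 'M[C]_n'.+1) (r : seq C) :
  (forall y : 'cV[C]_n'.+1, G *m ((G - 1%:M) *m y) = (G - 1%:M) *m y -> G *m y = y) ->
  forall u : 'cV[C]_n'.+1, horner_mx G (\prod_(z <- r | z == 1) ('X - z%:P)) *m u = 0 -> G *m u = u.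
Proof.
move=> H1; elim: r => [|z r IH] u.
  by rewrite big_nil rmorph1 mul1mx => ->; rewrite mulmx0.
rewrite big_cons; case: ifP => hz; last exact: IH.
move/eqP: hz => ->.
rewrite mulrC rmorphM /= hornerXsubC -mulmxE -mulmxA => /IH hu.
by apply: H1; rewrite hu.
Qed.

End Abstract2.
Section Abstract3.
Variable R : realType.
Local Notation C := R[i].
Local Open Scope classical_set_scope.

Lemma conv_abstract N (G : 'M[C]_N) :
  (forall y : 'cV[C]_N, G *m ((G - 1%:M) *m y) = (G - 1%:M) *m y -> G *m y = y) ->
  (forall (l : C) (x : 'cV[C]_N), x != 0 -> G *m x = l *: x -> l != 1 -> `|l| < 1) ->
  forall y : 'cV[C]_N, exists2 w : 'cV[C]_N,
     (itG G k y : 'cV[C^o]_N) @[k --> \oo] --> (w : 'cV[C^o]_N) & G *m w = w.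
Proof.
case: N G => [|n'] G H1 H2 y.
  have hy : G *m y = y by rewrite [LHS]flatmx0 [RHS]flatmx0.
  by exists y => //; exact: cvg_fix.
have [r hr] := closed_field_poly_normal (char_poly G).
rewrite (monicP (char_poly_monic G)) scale1r in hr.
have hroots z : z \in r -> z != 1 -> `|z| < 1.
  move=> zr z1; have : root (char_poly G) z by rewrite hr root_prod_XsubC.
  by move/root_eigen => [x x0 hx]; exact: H2 hx z1.
have hsplit : char_poly G = \prod_(z <- r | z == 1) ('X - z%:P) * \prod_(z <- r | z != 1) ('X - z%:P).
  by rewrite hr (bigID (fun z => z == 1)) /=.
pose u := horner_mx G (\prod_(z <- r | z != 1) ('X - z%:P)) *m y.
have hu : G *m u = u.
  apply: (claimA (r := r) H1); rewrite /u mulmxA.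
  have -> : forall A B : 'M[C]_n'.+1, A *m B = A * B by [].
  have CH := Cayley_Hamilton G; rewrite hsplit rmorphM /= in CH.
  by rewrite CH mul0mx.
exact: claimB hroots y hu.
Qed.

End Abstract3.
Section Generic.
Variable R : realType.
Local Notation C := R[i].

Lemma Qpos_unit n (M : 'M[C]_n) : (forall x, x != 0 -> 0 < Q M x) -> M \in unitmx.
Proof.
move=> h; rewrite unitmxE unitfE; apply/negP => /eqP hd.
have : \det M^T == 0 by rewrite det_tr hd.
case/det0P => v v0 hv.
have x0 : v^T != 0 by apply: contra v0 => /eqP e; rewrite -[v]trmxK e trmx0.
have hx : M *m v^T = 0 by rewrite -[M]trmxK -trmx_mul hv trmx0.
by have := h _ x0; rewrite /Q /bf -mulmxA hx mulmx0 mxE ltxx.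
Qed.

Lemma Q0 n (M : 'M[C]_n) : Q M 0 = 0.
Proof. by rewrite /Q bf0l. Qed.

Lemma QNM n (M : 'M[C]_n) x : Q (- M) x = - Q M x.
Proof. by rewrite /Q bfNM raddfN. Qed.

Lemma QN n (M : 'M[C]_n) x : Q M (- x) = Q M x.
Proof. by rewrite /Q bfNl bfNr opprK. Qed.

Lemma QZ n (M : 'M[C]_n) a x :
  Q M (a *: x) = (complex.Re a ^+ 2 + complex.Im a ^+ 2) * Q M x.
Proof.
rewrite /Q bfZl bfZr; case: a => a1 a2; case: (bf M x x) => z1 z2 /=; ring.
Qed.

Lemma Q_par n (M : 'M[C]_n) a b : Q M (a + b) + Q M (a - b) = 2 * Q M a + 2 * Q M b.
Proof.
rewrite /Q !bfDl !bfDr !bfNl !bfNr !raddfD !raddfN /=; ring.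
Qed.

Lemma Phi_expand n (Sg K : 'M[C]_n) x : Defs.hermitian Sg -> Sg \in unitmx ->
  Q (invmx Sg) ((Sg + K) *m x) = Q Sg x + 2 * Q K x + Q (invmx Sg) (K *m x).
Proof.
move=> hS hu.
rewrite mulmxDl /Q bfDl !bfDr !bf_mull !bf_mulr hS (mulmxV hu) mul1mx.
rewrite -[ctr K *m _ *m Sg]mulmxA (mulVmx hu) mulmx1 !raddfD /=.
rewrite mul1mx -/(Q (ctr K) x) Q_ctr /Q; ring.
Qed.

Lemma Phi_pm n (Sg K : 'M[C]_n) x : Defs.hermitian Sg -> Sg \in unitmx ->
  Q (invmx Sg) ((Sg + K) *m x) = Q (invmx Sg) ((Sg - K) *m x) + 4 * Q K x.
Proof.
move=> hS hu; rewrite !Phi_expand // QNM mulNmx QN; ring.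
Qed.

Lemma Phi_Sg n (Sg : 'M[C]_n) t : Defs.hermitian Sg -> Sg \in unitmx ->
  Q (invmx Sg) (Sg *m t) = Q Sg t.
Proof.
move=> hS hu; have := Phi_expand 0 t hS hu.
by rewrite addr0 /Q bf0M mul0mx bf0l /= mulr0 !addr0.
Qed.

Lemma Phi_pos n (Sg : 'M[C]_n) y : Defs.hermitian Sg -> (forall x, x != 0 -> 0 < Q Sg x) ->
  y != 0 -> 0 < Q (invmx Sg) y.
Proof.
move=> hS hp y0; have hu := Qpos_unit hp.
rewrite -(mulKVmx hu y) Phi_Sg //; apply: hp.
by apply: contra y0 => /eqP e; rewrite -(mulKVmx hu y) e mulmx0.
Qed.

Lemma Phi_ge0 n (Sg : 'M[C]_n) y : Defs.hermitian Sg -> (forall x, x != 0 -> 0 < Q Sg x) ->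
  0 <= Q (invmx Sg) y.
Proof.
move=> hS hp; have [->|y0] := eqVneq y 0; first by rewrite Q0.
exact/ltW/Phi_pos.
Qed.

End Generic.
Section Gamma.
Variable R : realType.
Local Notation C := R[i].

Definition Gam N (Sg P S : 'M[C]_N) :=
  invmx (Sg + S) *m (Sg - P) *m invmx (Sg + P) *m (Sg - S).
Definition vv N (Sg P S : 'M[C]_N) (x : 'cV[C]_N) := invmx (Sg + P) *m ((Sg - S) *m x).
Definition nrm N (Sg S : 'M[C]_N) (x : 'cV[C]_N) := Q (invmx Sg) ((Sg + S) *m x).

Variables (N : nat) (Sg P S : 'M[C]_N).

Lemma unit_SgS : (forall x, x != 0 -> 0 < Q Sg x) -> skew_hermitian S -> Sg + S \in unitmx.
Proof. by move=> hp hS; apply: Qpos_unit => x x0; rewrite QDM (Q_skew _ hS) addr0 hp. Qed.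

Lemma unit_SgP : (forall x, x != 0 -> 0 < Q Sg x) -> (forall v, 0 <= Q P v) -> Sg + P \in unitmx.
Proof.
move=> hp hP; apply: Qpos_unit => x x0; rewrite QDM.
by apply: lt_le_trans (hp _ x0) _; rewrite lerDl.
Qed.

Section Props.
Hypotheses (hS : Defs.hermitian Sg) (hp : forall x, x != 0 -> 0 < Q Sg x)
  (hSk : skew_hermitian S) (hP : forall v, 0 <= Q P v).

Let uS := unit_SgS hp hSk.
Let uP := unit_SgP hp hP.
Let uSg := Qpos_unit hp.

Lemma vv_eq x : (Sg + P) *m vv Sg P S x = (Sg - S) *m x.
Proof. by rewrite /vv mulKVmx. Qed.

Lemma Gam_eq x : (Sg + S) *m (Gam Sg P S *m x) = (Sg - P) *m vv Sg P S x.
Proof. by rewrite /Gam /vv -!mulmxA mulKVmx. Qed.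

Lemma contraction x : nrm Sg S (Gam Sg P S *m x) = nrm Sg S x - 4 * Q P (vv Sg P S x).
Proof.
rewrite /nrm Gam_eq.
have h1 := Phi_pm P (vv Sg P S x) hS uSg.
have h2 := Phi_pm S x hS uSg.
rewrite vv_eq in h1; rewrite (Q_skew _ hSk) in h2; lra.
Qed.

Lemma nrm_pos x : x != 0 -> 0 < nrm Sg S x.
Proof.
move=> x0; apply: Phi_pos => //.
by apply: contra x0 => /eqP e; rewrite -(mulKmx uS x) e mulmx0.
Qed.

Lemma nrm_ge0 x : 0 <= nrm Sg S x.
Proof. exact: Phi_ge0. Qed.

Lemma nrm_dec x : nrm Sg S (Gam Sg P S *m x) <= nrm Sg S x.
Proof. by rewrite contraction; have := hP (vv Sg P S x); lra. Qed.

Lemma Re_nat k : complex.Re (k%:R : C) = k%:R.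
Proof. by rewrite -(rmorph_nat (real_complex R)). Qed.
Lemma Im_nat k : complex.Im (k%:R : C) = 0.
Proof. by rewrite -(rmorph_nat (real_complex R)). Qed.

Lemma gam_H1 (y : 'cV[C]_N) : Gam Sg P S *m ((Gam Sg P S - 1%:M) *m y) = (Gam Sg P S - 1%:M) *m y ->
  Gam Sg P S *m y = y.
Proof.
set G := Gam Sg P S; set z := (G - 1%:M) *m y => hz.
have hzy : G *m y = y + z by rewrite /z mulmxBl mul1mx addrC subrK.
have hit k : itG G k y = y + k%:R *: z.
  elim: k => [|k IH]; first by rewrite scale0r addr0.
  by rewrite itG_S IH mulmxDr hzy -scalemxAr hz -addrA mulrS scalerDl scale1r.
have hdec k : nrm Sg S (itG G k y) <= nrm Sg S y.
  elim: k => // k IH; rewrite itG_S; exact: le_trans (nrm_dec _) IH.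
have hpar (a b : 'cV[C]_N) : nrm Sg S (a - b) <= 2 * nrm Sg S a + 2 * nrm Sg S b.
  have := Q_par (invmx Sg) ((Sg + S) *m a) ((Sg + S) *m b).
  rewrite /nrm -mulmxDr -mulmxBr; have := nrm_ge0 (a + b); rewrite /nrm => h1 h2; by rewrite -h2 -subr_ge0 addrK.
have hk k : k%:R ^+ 2 * nrm Sg S z <= 4 * nrm Sg S y.
  have := hpar (itG G k y) y; rewrite hit addrC addKr.
  rewrite /nrm -scalemxAr QZ Re_nat Im_nat -/(nrm Sg S z) expr0n /= addr0.
  have := hdec k; rewrite hit /nrm => h1 h2; lra.
have [z0|z0] := eqVneq z 0; first by rewrite hzy z0 addr0.
exfalso; have nz := nrm_pos z0.
have ny := nrm_ge0 y.
set b := 4 * nrm Sg S y / nrm Sg S z.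
have b0 : 0 <= b by apply: divr_ge0 => //; lra.
set k := (Num.Def.archi_bound b).+1.
have hkb : b < k%:R by rewrite (lt_le_trans (archi_boundP b0)) // ler_nat.
have hk1 : 1 <= (k%:R : R) by rewrite ler1n.
have := hk k.
have hb : b * nrm Sg S z = 4 * nrm Sg S y by rewrite /b divfK // gt_eqF.
have h3 : k%:R * nrm Sg S z <= k%:R ^+ 2 * nrm Sg S z.
  by rewrite expr2 -mulrA ler_peMl // mulr_ge0 // ?ler0n ?ltW.
have h4 : b * nrm Sg S z < k%:R * nrm Sg S z by rewrite ltr_pM2r.
lra.
Qed.

Lemma gam_H2 (l : C) (x : 'cV[C]_N) : x != 0 -> Gam Sg P S *m x = l *: x -> l != 1 ->
  (Q P (vv Sg P S x) = 0 -> l != 0 -> False) -> `|l| < 1.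
Proof.
move=> x0 hx l1 hspec.
have := contraction x; rewrite hx /nrm -scalemxAr QZ -/(nrm Sg S x) => h.
have nx := nrm_pos x0; have qp := hP (vv Sg P S x).
set s := complex.Re l ^+ 2 + complex.Im l ^+ 2 in h.
have hs : s < 1.
  have [q0|q0] := eqVneq (Q P (vv Sg P S x)) 0.
    exfalso; apply: hspec => //; apply/eqP => l0.
    move: h; rewrite /s l0 /= expr0n /= addr0 mul0r q0 mulr0 subr0 => h'.
    by rewrite -h' ltxx in nx.
  have : 0 < Q P (vv Sg P S x) by rewrite lt_def q0 qp.
  nra.
have hl2 : `|l| ^+ 2 < 1 by rewrite -add_Re2_Im2 -/s -(rmorph1 (real_complex R)) ltcR.
have e := Cnorm_real (normr_ge0 l).
have t0 : 0 <= complex.Re `|l| by rewrite -lecR -e rmorph0.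
move: hl2; rewrite e -rmorphXn -(rmorph1 (real_complex R)) !ltcR => h2.
nra.
Qed.

End Props.
End Gamma.
Section Comb.
Variable R : realType.
Local Notation C := R[i].

Lemma cV_entry k (u v : 'cV[C]_k) : (forall i, u i 0 = v i 0) -> u = v.
Proof. by move=> h; apply/matrixP => i j; rewrite ord1 h. Qed.

Ltac entries h := move/matrixP/(_ h 0); rewrite !mxE.

Lemma comb1 k (l : C) (p a q : 'cV[C]_k) :
  p - a = q -> l *: (p + a) = - q -> (2 * l) *: p = (l - 1) *: q.
Proof.
move=> h1 h2; apply: cV_entry => i; move: h1 h2; entries i => h1; entries i => h2.
rewrite ?mxE; apply/eqP; rewrite -subr_eq0; apply/eqP.
have -> : 2 * l * p i 0 - (l - 1) * q i 0 =
  (l * (p i 0 + a i 0) - - q i 0) + l * ((p i 0 - a i 0) - q i 0) by ring.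
by rewrite h1 h2 !subrr mulr0 addr0.
Qed.

Lemma comb2 k (l : C) (p b c u w : 'cV[C]_k) :
  p - (- b + c) = u + w -> l *: (p + (- b + c)) = u - w ->
  (2 * l) *: p = (l + 1) *: u + (l - 1) *: w.
Proof.
move=> h1 h2; apply: cV_entry => i; move: h1 h2; entries i => h1; entries i => h2.
rewrite ?mxE; apply/eqP; rewrite -subr_eq0; apply/eqP.
have -> : 2 * l * p i 0 - ((l + 1) * u i 0 + (l - 1) * w i 0) =
  (l * (p i 0 + (- b i 0 + c i 0)) - (u i 0 - w i 0)) +
  l * ((p i 0 - (- b i 0 + c i 0)) - (u i 0 + w i 0)) by ring.
by rewrite h1 h2 !subrr mulr0 addr0.
Qed.

Lemma comb3 k (l : C) (p b c u w : 'cV[C]_k) :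
  p - (- b + c) = u + w -> l *: (p + (- b + c)) = u - w ->
  (2 * l) *: b - (2 * l) *: c = (l - 1) *: u + (l + 1) *: w.
Proof.
move=> h1 h2; apply: cV_entry => i; move: h1 h2; entries i => h1; entries i => h2.
rewrite ?mxE; apply/eqP; rewrite -subr_eq0; apply/eqP.
have -> : 2 * l * b i 0 + - (2 * l * c i 0) - ((l - 1) * u i 0 + (l + 1) * w i 0) =
  - (l * (p i 0 + (- b i 0 + c i 0)) - (u i 0 - w i 0)) +
  l * ((p i 0 - (- b i 0 + c i 0)) - (u i 0 + w i 0)) by ring.
by rewrite h1 h2 !subrr oppr0 mulr0 addr0.
Qed.

Lemma comb4 k (l : C) (b c X Y s u w : 'cV[C]_k) :
  (2 * l) *: b = (l - 1) *: X -> (2 * l) *: c = (l + 1) *: s + (l - 1) *: Y ->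
  (2 * l) *: b - (2 * l) *: c = (l - 1) *: u + (l + 1) *: w -> w = - s ->
  (l - 1) *: (X - Y - u) = 0.
Proof.
move=> h1 h2 h3 h4; rewrite h4 in h3; apply: cV_entry => i.
move: h1 h2 h3; entries i => h1; entries i => h2; entries i => h3.
rewrite ?mxE.
have -> : (l - 1) * (X i 0 - Y i 0 - u i 0) =
  - (2 * l * b i 0 - (l - 1) * X i 0) + (2 * l * c i 0 - ((l + 1) * s i 0 + (l - 1) * Y i 0))
  + ((2 * l * b i 0 + - (2 * l * c i 0)) - ((l - 1) * u i 0 + (l + 1) * - s i 0)) by ring.
by rewrite h3 h1 h2 !subrr oppr0 !addr0.
Qed.

Lemma combA k (l : C) (p a b q : 'cV[C]_k) :
  q = p - a - b -> l *: (p + a + b) = - q -> (2 * l) *: p = (l - 1) *: q.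
Proof.
move=> h1 h2; apply: cV_entry => i; move: h1 h2; entries i => h1; entries i => h2.
rewrite ?mxE; apply/eqP; rewrite -subr_eq0; apply/eqP.
have -> : 2 * l * p i 0 - (l - 1) * q i 0 =
  - l * (q i 0 - (p i 0 - a i 0 - b i 0)) + (l * (p i 0 + a i 0 + b i 0) - - q i 0) by ring.
by rewrite h2 h1 !subrr mulr0 addr0.
Qed.

Lemma combB k (l : C) (p bs cs u w : 'cV[C]_k) :
  u + w = bs + (p - cs) -> l *: (- bs + (p + cs)) = u - w ->
  (2 * l) *: p = (l + 1) *: u + (l - 1) *: w.
Proof.
move=> h1 h2; apply: cV_entry => i; move: h1 h2; entries i => h1; entries i => h2.
rewrite ?mxE; apply/eqP; rewrite -subr_eq0; apply/eqP.
have -> : 2 * l * p i 0 - ((l + 1) * u i 0 + (l - 1) * w i 0) =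
  - l * (u i 0 + w i 0 - (bs i 0 + (p i 0 - cs i 0))) +
  (l * (- bs i 0 + (p i 0 + cs i 0)) - (u i 0 - w i 0)) by ring.
by rewrite h2 h1 !subrr mulr0 addr0.
Qed.

Lemma combC k (l : C) (p bs cs u w : 'cV[C]_k) :
  u + w = bs + (p - cs) -> l *: (- bs + (p + cs)) = u - w ->
  (2 * l) *: bs - (2 * l) *: cs = (l - 1) *: u + (l + 1) *: w.
Proof.
move=> h1 h2; apply: cV_entry => i; move: h1 h2; entries i => h1; entries i => h2.
rewrite ?mxE; apply/eqP; rewrite -subr_eq0; apply/eqP.
have -> : 2 * l * bs i 0 + - (2 * l * cs i 0) - ((l - 1) * u i 0 + (l + 1) * w i 0) =
  - l * (u i 0 + w i 0 - (bs i 0 + (p i 0 - cs i 0))) -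
  (l * (- bs i 0 + (p i 0 + cs i 0)) - (u i 0 - w i 0)) by ring.
by rewrite h2 h1 !subrr mulr0 subr0.
Qed.

End Comb.
Section Block.
Variable R : realType.
Local Notation C := R[i].

Lemma hpd_Q_ge0 n (M : 'M[C]_n) x : hpd M -> 0 <= Q M x.
Proof.
move=> h; have [->|x0] := eqVneq x 0; first by rewrite Q0.
exact/ltW/hpd_Q.
Qed.

Lemma hpd_unit n (M : 'M[C]_n) : hpd M -> M \in unitmx.
Proof. by move=> h; apply: Qpos_unit => x; apply: hpd_Q. Qed.

Variables (n m : nat).

Lemma Sigma_herm (Pa : 'M[C]_n) (Pb : 'M[C]_m) : hpd Pa -> hpd Pb ->
  Defs.hermitian (block_mx Pa 0 0 Pb).
Proof. by move=> [ha _] [hb _]; rewrite /Defs.hermitian ctr_block !ctr0 ha hb. Qed.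

Lemma Q_col_diag (Pa : 'M[C]_n) (Pb : 'M[C]_m) x1 x2 :
  Q (block_mx Pa 0 0 Pb) (col_mx x1 x2) = Q Pa x1 + Q Pb x2.
Proof. by rewrite /Q bf_block !bf0M addr0 addr0 raddfD. Qed.

Lemma Sigma_pos (Pa : 'M[C]_n) (Pb : 'M[C]_m) : hpd Pa -> hpd Pb ->
  forall x, x != 0 -> 0 < Q (block_mx Pa 0 0 Pb) x.
Proof.
move=> ha hb x x0; rewrite -(vsubmxK x) Q_col_diag.
have g1 := hpd_Q_ge0 (usubmx x) ha; have g2 := hpd_Q_ge0 (dsubmx x) hb.
have [u0|u0] := eqVneq (usubmx x) 0.
  have d0 : dsubmx x != 0.
    by apply: contra x0 => /eqP d0; rewrite -(vsubmxK x) u0 d0 col_mx0.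
  by have := hpd_Q hb d0; lra.
by have := hpd_Q ha u0; lra.
Qed.

Lemma Scal_skew (AS : 'M[C]_n) (CS : 'M[C]_m) (BS : 'M[C]_(m, n)) :
  skew_hermitian AS -> skew_hermitian CS -> skew_hermitian (block_mx AS (ctr BS) (- BS) CS).
Proof.
move=> ha hc; rewrite /skew_hermitian ctr_block ctrK ctrN ha hc opp_block_mx opprK //.
Qed.

Lemma Pcal_Q (AP : 'M[C]_n) (CP : 'M[C]_m) (BP : 'M[C]_(m, n)) v1 v2 :
  Q (block_mx AP (ctr BP) (- BP) CP) (col_mx v1 v2) = Q AP v1 + Q CP v2.
Proof.
rewrite /Q bf_block bfNM -bf_conj !raddfD raddfN /= Re_conj.
rewrite -/(Q AP v1) -/(Q CP v2); ring.
Qed.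

Lemma Pcal_ge0 (AP : 'M[C]_n) (CP : 'M[C]_m) (BP : 'M[C]_(m, n)) :
  posdef AP -> possemidef CP -> forall v, 0 <= Q (block_mx AP (ctr BP) (- BP) CP) v.
Proof.
move=> ha hc v; rewrite -(vsubmxK v) Pcal_Q.
have g2 := possemidef_Q (dsubmx v) hc.
have [->|u0] := eqVneq (usubmx v) 0; first by rewrite Q0 add0r.
by have := posdef_Q ha u0; lra.
Qed.

End Block.
Section Spec.
Variable R : realType.
Local Notation C := R[i].

Lemma hspec (n m : nat)
  (C0 : 'M[C]_m) (AP AS : 'M[C]_n) (CP CS : 'M[C]_m) (BP BS : 'M[C]_(m, n))
  (Pa : 'M[C]_n) (Pb : 'M[C]_m) :
  posdef AP -> skew_hermitian AS -> C0 = CP + CS -> possemidef CP -> skew_hermitian CS ->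
  hpd Pa -> hpd Pb ->
  (forall r, in_null (C0 + ctr C0) r -> in_null C0 r) ->
  (forall r : 'cV[C]_m, r != 0 -> (C0 + ctr C0) *m r = 0 ->
     qform (Pb + CS *m invmx Pb *m ctr CS) r != qform (BS *m invmx Pa *m ctr BP) r) ->
  forall (l : C) (x : 'cV[C]_(n + m)),
  let Sg := block_mx Pa 0 0 Pb in
  let Pc := block_mx AP (ctr BP) (- BP) CP in
  let Sc := block_mx AS (ctr BS) (- BS) CS in
  x != 0 -> Gam Sg Pc Sc *m x = l *: x -> l != 1 ->
  Q Pc (vv Sg Pc Sc x) = 0 -> l != 0 -> False.
Proof.
move=> hAP hAS hC hCP hCS hPa hPb hnull hcond l x Sg Pc Sc x0 hx l1 hq l0.
have hSg : Defs.hermitian Sg := Sigma_herm hPa hPb.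
have hSgp := Sigma_pos hPa hPb.
have hSk : skew_hermitian Sc := Scal_skew BS hAS hCS.
have hPc := Pcal_ge0 BP hAP hCP.
have uSg := Qpos_unit hSgp.
have E1 := vv_eq Sc hSgp hPc x.
have E2 : (Sg + Sc) *m (l *: x) = (Sg - Pc) *m vv Sg Pc Sc x.
  by rewrite -hx (Gam_eq Pc hSgp hSk).
have hnx := nrm_pos hSg hSgp hSk x0.
move: E1 E2 hq hnx; set v := vv Sg Pc Sc x => E1 E2 hq hnx.
rewrite -(vsubmxK v) Pcal_Q in hq.
set v1 := usubmx v in hq; set r := dsubmx v in hq.
have q1 : 0 <= Q AP v1.
  have [->|u0] := eqVneq v1 0; first by rewrite Q0.
  exact/ltW/(posdef_Q hAP u0).
have q2 := possemidef_Q r hCP.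
have v10 : v1 = 0.
  apply/eqP; apply: contraT => u0; have := posdef_Q hAP u0; lra.
have hCPr : (CP + ctr CP) *m r = 0.
  apply: psd_zero.
  - by rewrite /Defs.hermitian ctrD ctrK addrC.
  - by move=> y; rewrite QDM Q_ctr; have := possemidef_Q y hCP; lra.
  - by rewrite QDM Q_ctr; lra.
have hCC : C0 + ctr C0 = CP + ctr CP.
  by rewrite hC ctrD hCS addrACA subrr addr0.
have hCr : C0 *m r = 0 by apply: hnull; rewrite /in_null hCC.
have hw : CP *m r = - (CS *m r).
  by apply/eqP; rewrite -addr_eq0 -mulmxDl -hC hCr.
have hv : v = col_mx 0 r by rewrite -v10 /v1 /r vsubmxK.
have r0 : r != 0.
  apply: contraTneq hnx => r0.
  rewrite hv r0 col_mx0 mulmx0 in E1.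
  rewrite -leNgt /nrm (Phi_pm Sc x hSg uSg) -E1 Q0 (Q_skew _ hSk) mulr0 addr0 //.
rewrite hv -[x](vsubmxK x) in E1 E2.
set x1 := usubmx x in E1 E2; set x2 := dsubmx x in E1 E2.
rewrite /Sg /Pc /Sc in E1 E2.
rewrite !add_block_mx opp_block_mx add_block_mx !mul_block_col in E1.
rewrite -scalemxAr !add_block_mx opp_block_mx add_block_mx !mul_block_col in E2.
rewrite !mulmx0 ?addr0 ?add0r in E1 E2.
case/eq_col_mx: E1 => Ea Ec.
rewrite scale_col_mx in E2.
case/eq_col_mx: E2 => Eb Ed.
rewrite ?mulmxDl ?mulmxBl ?mul0mx ?sub0r ?mulNmx ?opprK in Ea Ec Eb Ed.
have uPa := hpd_unit hPa; have uPb := hpd_unit hPb.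
have V1 := combA Ea Eb.
have F1 := congr1 (mulmx (BS *m invmx Pa)) V1.
rewrite -!scalemxAr -!mulmxA (mulKmx uPa) in F1.
have V2 := combB Ec Ed.
have F2 := congr1 (mulmx (CS *m invmx Pb)) V2.
rewrite mulmxDr -!scalemxAr -!mulmxA !(mulKmx uPb) in F2.
have V3 := combC Ec Ed.
have := comb4 F1 F2 V3 hw.
move/eqP; rewrite scaler_eq0 subr_eq0 (negbTE l1) /= subr_eq0 subr_eq => /eqP key.
have hcr : ctr CS *m r = CP *m r by rewrite hCS mulNmx hw.
have hnr : (C0 + ctr C0) *m r = 0 by rewrite hCC.
have := hcond r r0 hnr.
rewrite /qform -!mulmxA mulmxDl -!mulmxA hcr -key eqxx //.
Qed.

End Spec.
Section Lid.
Variable R : realType.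
Local Notation C := R[i].

Lemma combD k (a s bv pv : 'cV[C]_k) :
  bv + pv = a - s -> (a + s) - (bv - pv) = 2%:R *: (a - bv).
Proof.
move=> h1; apply: cV_entry => i; move/matrixP/(_ i 0): h1; rewrite !mxE => h1.
apply/eqP; rewrite -subr_eq0; apply/eqP.
have -> : a i 0 + s i 0 - (bv i 0 - pv i 0) - 2%:R * (a i 0 - bv i 0) =
  (bv i 0 + pv i 0) - (a i 0 - s i 0) by ring.
by rewrite h1 subrr.
Qed.

Lemma Lid N (Sg P S : 'M[C]_N) : (forall x, x != 0 -> 0 < Q Sg x) -> skew_hermitian S ->
  (forall v, 0 <= Q P v) -> forall e : 'cV[C]_N,
  e - Gam Sg P S *m e =
  2%:R *: (invmx (Sg + S) *m Sg *m invmx (Sg + P) *m ((P + S) *m e)).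
Proof.
move=> hp hSk hP e.
have uS := unit_SgS hp hSk; have uP := unit_SgP hp hP.
set v := vv Sg P S e.
have E1 := vv_eq S hp hP e.
have E2 := Gam_eq P hp hSk e.
have hev : e - v = invmx (Sg + P) *m ((P + S) *m e).
  rewrite -[e - v](mulKmx uP); congr (_ *m _).
  rewrite mulmxBr E1 !mulmxDl ?mulmxBl ?mulNmx; apply: cV_entry => i; rewrite !mxE; ring.
have h : (Sg + S) *m (e - Gam Sg P S *m e) = 2%:R *: (Sg *m (e - v)).
  rewrite mulmxBr E2 mulmxDl mulmxBl mulmxBr; apply: combD.
  by rewrite -mulmxDl E1 mulmxBl.
rewrite -[e - _](mulKmx uS) h hev -!scalemxAr !mulmxA //.
Qed.

End Lid.
Section Final.
Variable R : realType.
Local Notation C := R[i].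

Lemma Re_le0 (z : C) : z <= 0 -> complex.Re z <= 0.
Proof. by rewrite lecE => /andP [_ h]. Qed.

Lemma qform_zero_Q n (M : 'M[C]_n) r : qform M r = 0 -> Q M r = 0.
Proof. by rewrite /Q -qformE => ->. Qed.

End Final.

Theorem corollary1 (R : realType) (n m : nat)
  (A : 'M[R[i]]_n) (C : 'M[R[i]]_m) (B : 'M[R[i]]_(m, n))
  (AP AS : 'M[R[i]]_n) (CP CS : 'M[R[i]]_m) (BP BS : 'M[R[i]]_(m, n))
  (Pa : 'M[R[i]]_n) (Pb : 'M[R[i]]_m) (b : 'cV[R[i]]_(n + m)) :
  posdef A -> possemidef C -> (m <= n)%N ->
  (* the saddle point matrix is singular, and the system is consistent *)
  \det (block_mx A (ctr B) (- B) C) = 0 ->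
  (exists u, block_mx A (ctr B) (- B) C *m u = b) ->
  (* splittings *)
  A = AP + AS -> posdef AP -> skew_hermitian AS ->
  C = CP + CS -> possemidef CP -> skew_hermitian CS ->
  B = BP + BS ->
  hpd Pa -> hpd Pb ->
  (forall r, in_null (C + ctr C) r -> in_null C r) ->
  ((forall r, r != 0 -> in_null (C + ctr C) r ->
       qform (Pb + CS *m invmx Pb *m ctr CS) r
         != qform (BS *m invmx Pa *m ctr BP) r)
   \/ (forall r, r != 0 -> in_null (C + ctr C) r ->
       qform (BS *m invmx Pa *m ctr BP) r <= 0)
   \/ (forall r, in_null (C + ctr C) r -> in_null (ctr BS) r \/ in_null (ctr BP) r)
   \/ (posdef C \/ BS = 0 \/ BP = 0)) ->
  let Pcal := block_mx AP (ctr BP) (- BP) CP in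
  let Scal := block_mx AS (ctr BS) (- BS) CS in
  let Sigma := block_mx Pa 0 0 Pb in
  let Gamma := invmx (Sigma + Scal) *m (Sigma - Pcal)
                 *m invmx (Sigma + Pcal) *m (Sigma - Scal) in
  let c := 2%:R *: (invmx (Sigma + Scal) *m Sigma *m invmx (Sigma + Pcal) *m b) in
  semi_convergent Gamma c (block_mx A (ctr B) (- B) C) b.
Proof.
move=> hA hCpsd hmn hdet [us hus] hAsplit hAP hAS hCsplit hCP hCS hBsplit hPa hPb hnull hconds.
move=> Pcal Scal Sigma Gamma c.
have hcond : forall r : 'cV[R[i]]_m, r != 0 -> (C + ctr C) *m r = 0 ->
    qform (Pb + CS *m invmx Pb *m ctr CS) r != qform (BS *m invmx Pa *m ctr BP) r.
  move=> r r0 hr.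
  have hpos : 0 < Q (Pb + CS *m invmx Pb *m ctr CS) r.
    rewrite QDM.
    have -> : Q (CS *m invmx Pb *m ctr CS) r = Q (invmx Pb) (ctr CS *m r).
      by rewrite /Q bf_mull bf_mulr ctrK.
    have := hpd_Q hPb r0; have := Phi_ge0 (ctr CS *m r) hPb.1 (fun x => hpd_Q hPb).
    move=> h1 h2; lra.
  have hz : qform (BS *m invmx Pa *m ctr BP) r = 0 -> 
      qform (Pb + CS *m invmx Pb *m ctr CS) r != qform (BS *m invmx Pa *m ctr BP) r.
    by move=> ->; apply/eqP => /qform_zero_Q h; rewrite h ltxx in hpos.
  case: hconds => [h1|[h2|[h3|[h4|[h4|h4]]]]].
  - exact: h1 r r0 hr.
  - apply/eqP => e; have := Re_le0 (h2 r r0 hr); rewrite -e -/(Q _ r).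
    by rewrite leNgt hpos.
  - case: (h3 r hr) => h; apply: hz.
      by rewrite qformE -[BS]ctrK -mulmxA -bf_mull h bf0l.
    by rewrite qformE -bf_mulr h bf0r.
  - exfalso; have := hpd_Q h4 r0; rewrite /Q /bf -mulmxA hr mulmx0 mxE ltxx //.
  - by apply: hz; rewrite h4 !mul0mx qformE bf0M.
  - by apply: hz; rewrite h4 ctr0 mulmx0 qformE bf0M.
have hSg : Defs.hermitian Sigma := Sigma_herm hPa hPb.
have hSgp := Sigma_pos hPa hPb.
have hSk : skew_hermitian Scal := Scal_skew BS hAS hCS.
have hPc := Pcal_ge0 BP hAP hCP.
have H1 : forall y : 'cV[R[i]]_(n + m),
    Gamma *m ((Gamma - 1%:M) *m y) = (Gamma - 1%:M) *m y -> Gamma *m y = y.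
  by move=> y; apply: (gam_H1 hSg hSgp hSk hPc).
have H2 : forall (l : R[i]) (x : 'cV[R[i]]_(n + m)),
    x != 0 -> Gamma *m x = l *: x -> l != 1 -> `|l| < 1.
  move=> l x x0 hx l1; apply: (gam_H2 hSg hSgp hSk hPc x0 hx l1).
  exact: (hspec hAP hAS hCsplit hCP hCS hPa hPb hnull hcond x0 hx l1).
have hAcal : block_mx A (ctr B) (- B) C = Pcal + Scal.
  by rewrite /Pcal /Scal add_block_mx hAsplit hBsplit hCsplit ctrD opprD.
have hL := Lid hSgp hSk hPc.
move=> u0.
have [w hw Gw] := conv_abstract H1 H2 (u0 - us).
exists (us + w).
  have hus' : Gamma *m us + c = us.
    have := hL us; rewrite -hAcal hus -/c => e.
    by rewrite -e addrC subrK.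
  have hit k : iterate Gamma c u0 k = us + itG Gamma k (u0 - us).
    elim: k => [|k IH]; first by rewrite /iterate /= addrC subrK.
    rewrite /iterate /= -/(iterate Gamma c u0 k) IH.
    by rewrite mulmxDr addrAC hus'.
  rewrite (eq_cvg _ _ hit).
  exact: (@cvgD _ ('cV[R[i]^o]_(n + m)) _ _ _ (fun=> us) (fun k => itG Gamma k (u0 - us)) us w (cvg_cst _) hw).
rewrite mulmxDr hus.
suff -> : block_mx A (ctr B) (- B) C *m w = 0 by rewrite addr0.
have := hL w; rewrite Gw subrr => /esym/eqP.
rewrite scaler_eq0 pnatr_eq0 /= -hAcal => /eqP h.
have uS := unit_SgS hSgp hSk; have uP := unit_SgP hSgp hPc; have uSg := Qpos_unit hSgp.
move: h; rewrite -!mulmxA => h.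
have h' := congr1 (mulmx (Sigma + Scal)) h.
rewrite mulmx0 (mulKVmx uS) in h'.
have h'' := congr1 (mulmx (invmx Sigma)) h'.
rewrite mulmx0 (mulKmx uSg) in h''.
have h3 := congr1 (mulmx (Sigma + Pcal)) h''.
by rewrite mulmx0 (mulKVmx uP) in h3.
Qed.
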